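(* Let $\mathcal{A}$ be an $l$-visibly simple $*$-algebra of operators on a tensor product of finite-dimensional Hilbert spaces indexed by the sites of a metric space. Let $O$ be any operator (not necessarily in $\mathcal{A}$). If there exists $X\in\mathcal{A}$ supported on a set $S$ such that $\mathrm{tr}(XO)\,\mathrm{tr}(I)\ne\mathrm{tr}(X)\,\mathrm{tr}(O)$, then there is an operator $P\in\mathcal{A}$ supported on the set of sites within distance $l$ of $S$ such that $[O,P]\ne0$.
   Context: An operator is supported on a set $S$ if it equals an operator on $\bigotimes_{x\in S}\mathcal{H}_x$ tensored with the identity; the support is the minimal such set (scalars have empty support). $\mathcal{A}$ is $l$-visibly simple if for every $O\in\mathcal{A}$ and every site $x$ in the support of $O$ there is $P\in\mathcal{A}$ supported within distance $l$ of $x$ with $[O,P]\ne0$. *)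

(* Defs.v *)
From HB Require Import structures.
From mathcomp Require Import all_boot all_order all_algebra.
From mathcomp Require Import reals complex.
Set Implicit Arguments. Unset Strict Implicit. Unset Printing Implicit Defensive.
Import Order.TTheory GRing.Theory Num.Theory.
Local Open Scope ring_scope.

(* Basis configurations of (x) H_x, where dim H_x = n x. *)
Definition config (V : finType) (n : V -> nat) := {dffun forall x : V, 'I_(n x)}.

Definition hdim (V : finType) (n : V -> nat) : nat := #|{: config n}|.

(* Operators on (x) H_x, entries in C = R[i]. *)
Definition op (R : realType) (V : finType) (n : V -> nat) :=
  'M[R[i]]_(hdim n).

Definition cfg (V : finType) (n : V -> nat) (i : 'I_(hdim n)) : config n :=
  enum_val i.

(* O is supported on S : O = A (x) I_{V \ S} for some operator A on (x)_{x in S} H_x.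
   A is represented by a kernel on full configurations depending only on the
   S-coordinates of its arguments. *)
Definition supported_on (R : realType) (V : finType) (n : V -> nat)
    (S : {set V}) (O : op R n) : Prop :=
  exists A : config n -> config n -> R[i],
    (forall c1 c2 d1 d2 : config n,
        (forall x, x \in S -> c1 x = c2 x /\ d1 x = d2 x) ->
        A c1 d1 = A c2 d2) /\
    (forall i j : 'I_(hdim n),
        O i j = if [forall x, (x \notin S) ==> (cfg i x == cfg j x)]
                then A (cfg i) (cfg j) else 0).

Definition in_support (R : realType) (V : finType) (n : V -> nat) (O : op R n)
    (x : V) : Prop :=
  forall S : {set V}, supported_on S O -> x \in S.

Definition adj (R : realType) (V : finType) (n : V -> nat) (O : op R n) : op R n :=
  (map_mx (fun z : R[i] => z^*) O)^T.

Definition commutator (R : realType) (V : finType) (n : V -> nat) (O P : op R n)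
    : op R n := O *m P - P *m O.

Definition star_algebra (R : realType) (V : finType) (n : V -> nat)
    (A : op R n -> Prop) : Prop :=
  [/\ A 1%:M,
      (forall O P, A O -> A P -> A (O + P)),
      (forall (c : R[i]) O, A O -> A (c *: O)),
      (forall O P, A O -> A P -> A (O *m P)) &
      (forall O, A O -> A (adj O))].

Definition is_metric (R : realType) (V : finType) (d : V -> V -> R) : Prop :=
  [/\ forall x y, 0 <= d x y,
      forall x y, (d x y == 0) = (x == y),
      forall x y, d x y = d y x &
      forall x y z, d x z <= d x y + d y z].

Definition nbhd (R : realType) (V : finType) (d : V -> V -> R) (l : R)
    (S : {set V}) : {set V} :=
  [set y | [exists x in S, d x y <= l]].

Definition visibly_simple (R : realType) (V : finType) (n : V -> nat)
    (d : V -> V -> R) (l : R) (A : op R n -> Prop) : Prop :=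
  forall O, A O -> forall x, in_support O x ->
    exists P, [/\ A P, supported_on (nbhd d l [set x]) P &
                  commutator O P != 0].

(* Main.v *)
Require Import Defs.
From HB Require Import structures.
From mathcomp Require Import all_boot all_order all_algebra.
From mathcomp Require Import reals complex.
From Stdlib Require Import Classical.
From mathcomp Require Import zify.
Import Order.TTheory GRing.Theory Num.Theory.
Local Open Scope ring_scope.

Section Proj.
Variable R : realType.
Variable m : nat.
Local Notation M := 'M[R[i]]_m.
Definition adjm (Z : M) : M := (map_mx (fun z : R[i] => z^*) Z)^T.

Lemma tr_adj_eq0 (Z : M) : \tr (Z *m adjm Z) = 0 -> Z = 0.
Proof.
move=> H.
have H' : \sum_i \sum_j Z i j * (Z i j)^* = 0.
  rewrite -[RHS]H /mxtrace; apply: eq_bigr => i _; rewrite !mxE; apply: eq_bigr => j _; rewrite !mxE //.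
have pos : forall i, 0 <= \sum_j Z i j * (Z i j)^*.
  by move=> i; apply: sumr_ge0 => j _; rewrite mul_conjC_ge0.
apply/matrixP => i j; rewrite mxE.
have Hi : \sum_j Z i j * (Z i j)^* = 0 by apply: (psumr_eq0P (fun i _ => pos i) H').
have : Z i j * (Z i j)^* = 0 by apply: (psumr_eq0P (fun j _ => mul_conjC_ge0 (Z i j)) Hi).
by move/eqP; rewrite mul_conjC_eq0 => /eqP.
Qed.

Lemma tr_lin k (a : 'I_k -> R[i]) (E : 'I_k -> M) (N : M) :
  \tr ((\sum_i a i *: E i) *m N) = \sum_i a i * \tr (E i *m N).
Proof.
rewrite mulmx_suml raddf_sum; apply: eq_bigr => i _.
rewrite -scalemxAl; exact: mxtraceZ.
Qed.

Variable A : M -> Prop.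
Hypothesis A0 : A 0.
Hypothesis AD : forall O P, A O -> A P -> A (O + P).
Hypothesis AZ : forall c O, A O -> A (c *: O).
Hypothesis Aadj : forall O, A O -> A (adjm O).

Lemma A_sum k (a : 'I_k -> R[i]) (E : 'I_k -> M) :
  (forall i, A (E i)) -> A (\sum_i a i *: E i).
Proof.
move=> HE; apply: (big_ind A) => //; by move=> i _; apply: AZ.
Qed.

Lemma span_in (s : seq M) : (forall x, x \in s -> A x) ->
  forall v, v \in <<s>>%VS -> A v.
Proof.
move=> Hs v; rewrite -[s]/(val (in_tuple s)) => /coord_span ->.
apply: A_sum => i; apply: Hs; apply: mem_nth; exact: (ltn_ord i).
Qed.

Lemma span_grow j : forall s : seq M, (forall x, x \in s -> A x) ->
  (\dim (fullv : {vspace M}) - \dim <<s>> <= j)%N ->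
  exists s' : seq M, (forall x, x \in s' -> A x) /\ (forall v, A v -> v \in <<s'>>%VS).
Proof.
elim: j => [|j IH] s Hs Hd.
  exists s; split => // v _.
  have : (<<s>> == fullv)%VS by rewrite eqEdim subvf -subn_eq0 -leqn0.
  by move/eqP ->; rewrite memvf.
case: (classic (forall v, A v -> v \in <<s>>%VS)) => [H|]; first by exists s; split.
move/not_all_ex_not => [v Hv]; have [Av nv] := imply_to_and _ _ Hv.
apply: (IH (v :: s)).
  by move=> x; rewrite inE => /orP [/eqP ->|]; [|apply: Hs].
have sub : (<<s>> <= <<v :: s>>)%VS by rewrite span_cons addvSr.
have lt : (\dim <<s>> < \dim <<v :: s>>)%N.
  rewrite (ltn_leqif (dimv_leqif_eq sub)); apply/eqP => E.
  apply: nv; rewrite E span_cons; have := memv_add (memv_line v) (mem0v <<s>>%VS); by rewrite addr0.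
have := dimvS (subvf <<v :: s>>).
move: Hd; lia.
Qed.

Lemma span_exists : exists k (e : k.-tuple M), free e /\
  (forall v, v \in <<e>>%VS -> A v) /\ (forall v, A v -> v \in <<e>>%VS).
Proof.
have [s' [Hs' Hsp]] := span_grow (\dim (fullv : {vspace M})) [::] (fun x (H : x \in [::]) => False_ind _ (notF H)) (leq_subr _ _).
exists (\dim <<s'>>%VS), (vbasis <<s'>>%VS).
have B := vbasisP <<s'>>%VS.
split; first exact: basis_free B.
rewrite (span_basis B); split => //; exact: span_in.
Qed.

Lemma trB (X Y : M) : \tr (X - Y) = \tr X - \tr Y.
Proof. by rewrite mxtraceD; congr (_ + _); exact: (raddfN (@mxtrace _ m)). Qed.

Lemma proj_exists O : exists Q, A Q /\ forall W, A W -> \tr (W *m Q) = \tr (W *m O).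
Proof.
have [k [e [fe [inA spanA]]]] := span_exists.
have eA : forall i : 'I_k, A e`_i.
  by move=> i; apply: inA; apply: memv_span; apply: mem_nth; rewrite size_tuple.
pose G : 'M[R[i]]_k := \matrix_(i, j) \tr (e`_i *m e`_j).
pose b : 'rV[R[i]]_k := \row_j \tr (O *m e`_j).
have Gu : G \in unitmx.
  rewrite unitmxE unitfE; apply/negP => /det0P [v vn vG].
  pose Y := \sum_i v 0 i *: e`_i.
  have YA : A Y by apply: A_sum.
  have Ye : forall j : 'I_k, \tr (Y *m e`_j) = 0.
    move=> j; rewrite tr_lin; have := congr1 (fun N : 'rV_k => N 0 j) vG; rewrite !mxE => E; rewrite -[RHS]E.
    by apply: eq_bigr => i _; rewrite mxE.
  have YW : forall W, W \in <<e>>%VS -> \tr (Y *m W) = 0.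
    move=> W /coord_span ->; rewrite mxtrace_mulC tr_lin; apply: big1 => j _.
    by rewrite mxtrace_mulC Ye mulr0.
  have Y0 : Y = 0 by apply: tr_adj_eq0; apply: YW; apply: spanA; exact: Aadj.
  move/negP: vn; apply; apply/eqP/rowP => i; rewrite mxE.
  move/freeP: fe => H; exact: (H (fun i => v 0 i) Y0 i).
pose c := b *m invmx G.
pose Q := \sum_i c 0 i *: e`_i.
exists Q; split; first by apply: A_sum.
have Qe : forall j : 'I_k, \tr (Q *m e`_j) = \tr (O *m e`_j).
  move=> j; rewrite tr_lin; have : (c *m G) 0 j = b 0 j by rewrite /c mulmxKV.
  rewrite !mxE => <-; apply: eq_bigr => i _; rewrite /G; congr (_ * _); by rewrite mxE.
move=> W /spanA /coord_span ->; rewrite !tr_lin; apply: eq_bigr => j _.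
by rewrite mxtrace_mulC Qe mxtrace_mulC.
Qed.

Hypothesis AM : forall O P, A O -> A P -> A (O *m P).

Lemma proj_comm O Q P : A Q -> (forall W, A W -> \tr (W *m Q) = \tr (W *m O)) ->
  A P -> O *m P = P *m O -> Q *m P = P *m Q.
Proof.
move=> AQ HQ AP HOP.
have AB : forall X Y, A X -> A Y -> A (X - Y).
  by move=> X Y AX AY; apply: AD => //; rewrite -scaleN1r; apply: AZ.
have E1 : forall Y N, A Y -> \tr (Y *m (N *m P - P *m N)) = \tr ((P *m Y - Y *m P) *m N).
  move=> Y N _; rewrite mulmxBl mulmxBr !trB mulmxA; congr (_ - _).
    by rewrite mxtrace_mulC mulmxA.
  by rewrite mulmxA.
have HZ : forall Y, A Y -> \tr (Y *m (Q *m P - P *m Q)) = 0.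
  move=> Y AY; rewrite E1 // HQ; last by apply: AB; apply: AM.
  by rewrite -E1 // HOP subrr mulmx0 mxtrace0.
apply/eqP; rewrite -subr_eq0; apply/eqP; apply: tr_adj_eq0.
rewrite mxtrace_mulC; apply: HZ; apply: Aadj; apply: AB; exact: AM.
Qed.

End Proj.
Section Supp.
Variable R : realType.
Variable V : finType.
Variable n : V -> nat.
Local Notation cf := (config n).

Definition E (O : op R n) (c d : cf) : R[i] := O (enum_rank c) (enum_rank d).
Definition agree (S : {set V}) (c d : cf) : bool :=
  [forall x, (x \notin S) ==> (c x == d x)].
Definition supp' S (O : op R n) :=
  (forall c d, ~~ agree S c d -> E O c d = 0) /\
  (forall c d c' d', agree S c d -> agree S c' d' ->
     (forall x, x \in S -> c x = c' x) -> (forall x, x \in S -> d x = d' x) ->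
     E O c d = E O c' d').
Definition mix (S : {set V}) (c d : cf) : cf :=
  [ffun x => if x \in S then d x else c x].

Lemma mixE (S : {set V}) (c d : cf) x : mix S c d x = if x \in S then d x else c x.
Proof. by rewrite ffunE. Qed.

Lemma agreeP (S : {set V}) (c d : cf) : reflect (forall x, x \notin S -> c x = d x) (agree S c d).
Proof.
apply: (iffP forallP) => H x.
  by move=> xS; move: (H x); rewrite xS => /eqP.
by apply/implyP => xS; rewrite H.
Qed.

Lemma cfgE (O : op R n) i j : O i j = E O (cfg i) (cfg j).
Proof. by rewrite /E /cfg !enum_valK. Qed.

Lemma supportedE (S : {set V}) (O : op R n) : supported_on S O <-> supp' S O.
Proof.
split.
  move=> [K [HK HO]]; split.
    move=> c d nag; rewrite /E HO /cfg !enum_rankK.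
    by rewrite /agree in nag; rewrite (negbTE nag).
  move=> c d c' d' ag ag' Hc Hd; rewrite /E !HO /cfg !enum_rankK.
  rewrite /agree in ag ag'; rewrite ag ag'; apply: HK => x xS; split; [exact: Hc|exact: Hd].
move=> [H0 H1].
exists (fun c d => E O c (mix S c d)); split.
  move=> c1 c2 d1 d2 H; apply: H1.
  - by apply/agreeP => x xS; rewrite mixE (negbTE xS).
  - by apply/agreeP => x xS; rewrite mixE (negbTE xS).
  - by move=> x xS; case: (H x xS).
  - by move=> x xS; rewrite !mixE xS; case: (H x xS).
move=> i j; rewrite cfgE; case: ifP => ag.
  apply: H1 => //.
  - by apply/agreeP => x xS; rewrite mixE (negbTE xS).
  - by move=> x xS; rewrite mixE xS.
by apply: H0; rewrite /agree ag.
Qed.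
Lemma cf_ext (c d : cf) : (forall x, c x = d x) -> c = d.
Proof. by move=> H; apply/ffunP => x; apply: H. Qed.

Lemma agree_sub (T T' : {set V}) (c d : cf) : T \subset T' -> agree T c d -> agree T' c d.
Proof.
move=> sub /agreeP H; apply/agreeP => x xT'; apply: H.
by apply: contra xT'; move/subsetP: sub; apply.
Qed.

Lemma supp_setT (O : op R n) : supp' setT O.
Proof.
split.
  by move=> c d; rewrite /agree; move/forallPn => [x]; rewrite in_setT.
move=> c d c' d' _ _ Hc Hd.
have -> : c = c' by apply: cf_ext => x; apply: Hc; exact: in_setT.
have -> : d = d' by apply: cf_ext => x; apply: Hd; exact: in_setT.
by [].
Qed.

Lemma supp_mono (T T' : {set V}) (O : op R n) : T \subset T' -> supp' T O -> supp' T' O.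
Proof.
move=> sub [H0 H1]; split.
  by move=> c d nag; apply: H0; apply: contra nag; apply: agree_sub.
move=> c d c' d' ag ag' Hc Hd.
have key : agree T c d = agree T c' d'.
  apply/idP/idP => /agreeP H; apply/agreeP => x xT.
    case: (boolP (x \in T')) => xT'.
      by rewrite -Hc // -Hd // H.
    by move/agreeP: ag' => ->.
  case: (boolP (x \in T')) => xT'.
    by rewrite Hc // Hd // H.
  by move/agreeP: ag => ->.
case: (boolP (agree T c d)) => agT.
  apply: H1 => //; first by rewrite -key.
    by move=> x xT; apply: Hc; move/subsetP: sub; apply.
  by move=> x xT; apply: Hd; move/subsetP: sub; apply.
by rewrite !H0 // -key.
Qed.

Lemma supp_inter (T1 T2 : {set V}) (O : op R n) :
  supp' T1 O -> supp' T2 O -> supp' (T1 :&: T2) O.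
Proof.
move=> [H0 H1] [K0 K1]; split.
  move=> c d nag.
  case: (boolP (agree T1 c d)) => a1; last exact: H0.
  case: (boolP (agree T2 c d)) => a2; last exact: K0.
  exfalso; move/negP: nag; apply; apply/agreeP => x.
  rewrite in_setI negb_and => /orP [x1|x2].
    by move/agreeP: a1; apply.
  by move/agreeP: a2; apply.
move=> c d c' d' ag ag' Hc Hd.
pose k := mix T2 c' c; pose l := mix T2 d' d.
have sub1 : T1 :&: T2 \subset T1 by apply: subsetIl.
have sub2 : T1 :&: T2 \subset T2 by apply: subsetIr.
transitivity (E O k l).
  apply: K1.
  - exact: agree_sub ag.
  - apply/agreeP => x xT2; rewrite !mixE (negbTE xT2).
    by move/agreeP: ag'; apply; rewrite in_setI negb_and xT2 orbT.
  - by move=> x xT2; rewrite mixE xT2.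
  - by move=> x xT2; rewrite mixE xT2.
apply: H1.
- apply/agreeP => x xT1; rewrite !mixE; case: ifP => xT2.
    by move/agreeP: ag; apply; rewrite in_setI negb_and xT1.
  by move/agreeP: ag'; apply; rewrite in_setI negb_and xT1.
- exact: agree_sub ag'.
- move=> x xT1; rewrite mixE; case: ifP => xT2 //.
  by apply: Hc; rewrite in_setI xT1 xT2.
- move=> x xT1; rewrite mixE; case: ifP => xT2 //.
  by apply: Hd; rewrite in_setI xT1 xT2.
Qed.

Lemma supp_avoid (S : {set V}) (O : op R n) :
  (forall x, x \in S -> exists T, supp' T O /\ x \notin T) -> supp' (~: S) O.
Proof.
move=> H.
have gen : forall s : seq V, (forall x, x \in s -> x \in S) ->
    exists T, supp' T O /\ forall x, x \in s -> x \notin T.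
  elim=> [|y s IH] Hs.
    by exists setT; split => //; apply: supp_setT.
  have [T [ST HT]] := IH (fun x xs => Hs x (@mem_behead _ (y :: s) x xs)).
  have [Ty [STy yT]] := H y (Hs y (mem_head y s)).
  exists (T :&: Ty); split; first exact: supp_inter.
  move=> x; rewrite inE => /orP [/eqP ->|xs]; rewrite in_setI negb_and.
    by rewrite yT orbT.
  by rewrite HT.
have [T [ST HT]] := gen (enum S) (fun x xs => etrans (esym (mem_enum _ x)) xs).
apply: supp_mono ST; apply/subsetP => x xT; rewrite in_setC.
apply/negP => xS; have := HT x; rewrite mem_enum xS => /(_ isT).
by rewrite xT.
Qed.

Lemma tr_E (O : op R n) : \tr O = \sum_c E O c c.
Proof. by rewrite /mxtrace (reindex (@enum_rank cf)) //; apply: onW_bij; apply: enum_rank_bij. Qed.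

Lemma mulE (X Q : op R n) c d : E (X *m Q) c d = \sum_e E X c e * E Q e d.
Proof. by rewrite /E mxE (reindex (@enum_rank cf)) //; apply: onW_bij; apply: enum_rank_bij. Qed.

Lemma tr_factor (S : {set V}) (X Q : op R n) : supp' S X -> supp' (~: S) Q ->
  \tr (X *m Q) * \tr (1%:M : op R n) = \tr X * \tr Q.
Proof.
move=> [X0 X1] [Q0 Q1].
have diag : forall c d, c <> d -> E X c d * E Q d c = 0.
  move=> c d ne; case: (boolP (agree S c d)) => ag; last by rewrite X0 // mul0r.
  rewrite (Q0 d c) ?mulr0 //; apply/negP => ag'; apply: ne; apply: cf_ext => x.
  case: (boolP (x \in S)) => xS.
    by symmetry; move/agreeP: ag'; apply; rewrite in_setC xS.
  by move/agreeP: ag; apply.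
have trXQ : \tr (X *m Q) = \sum_c E X c c * E Q c c.
  rewrite tr_E; apply: eq_bigr => c _; rewrite mulE (bigD1 c) //= big1 ?addr0 //.
  by move=> d /eqP ne; apply: diag => E; apply: ne.
have agr : forall (T : {set V}) (c : cf), agree T c c by move=> T c; apply/agreeP.
have fX : forall c c' : cf, (forall x, x \in S -> c x = c' x) -> E X c c = E X c' c'.
  by move=> c c' H; apply: X1.
have fQ : forall c c' : cf, (forall x, x \in ~: S -> c x = c' x) -> E Q c c = E Q c' c'.
  by move=> c c' H; apply: Q1.
pose phi (p : cf * cf) := (mix S p.2 p.1, mix S p.1 p.2).
have phiK : cancel phi phi.
  move=> [c d]; rewrite /phi /=; congr pair; apply: cf_ext => x; rewrite !mixE; by case: (x \in S).
pose H (c : cf) := E X c c * E Q c c.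
rewrite !tr_E in trXQ *; rewrite trXQ.
have -> : \sum_c E (1%:M : op R n) c c = (#|{: cf}|)%:R.
  rewrite /E; under eq_bigr do rewrite mxE eqxx.
  by rewrite sumr_const.
have L : (\sum_c H c) * (#|{: cf}|)%:R = \sum_(p : cf * cf) H p.1.
  rewrite -(pair_bigA _ (fun c (d : cf) => H c)) /= mulr_natr -sumrMnl; apply: eq_bigr => c _.
  by rewrite sumr_const.
rewrite [LHS]L big_distrlr /=.
rewrite pair_bigA /= [LHS](reindex_inj (can_inj phiK)) /=.
apply: eq_bigr => p _; rewrite /H /phi /=; congr (_ * _).
  by apply: fX => x xS; rewrite mixE xS.
by apply: fQ => x; rewrite in_setC => xS; rewrite mixE (negbTE xS).
Qed.

End Supp.
Arguments E {R V n}.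
Arguments supp' {R V n}.
Arguments supportedE {R V n}.
Arguments supp_mono {R V n}.
Arguments supp_avoid {R V n}.
Arguments tr_factor {R V n}.

Theorem mainTheorem20 (R : realType) (V : finType) (n : V -> nat)
    (d : V -> V -> R) (l : R) (A : op R n -> Prop) (O : op R n) :
  is_metric d ->
  star_algebra A ->
  visibly_simple d l A ->
  forall (X : op R n) (S : {set V}),
    A X -> supported_on S X ->
    \tr (X *m O) * \tr (1%:M : op R n) != \tr X * \tr O ->
    exists P : op R n,
      [/\ A P, supported_on (nbhd d l S) P & commutator O P != 0].
Proof.
move=> _ [A1 AD AZ AM Aadj] vis X S AX suppX Htr.
apply: NNPP => Hno.
have Hc : forall P, A P -> supported_on (nbhd d l S) P -> commutator O P = 0.
  move=> P AP SP; apply/eqP; apply/negPn/negP => ne; apply: Hno; exists P; split => //.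
have A0 : A 0 by rewrite -(scale0r (1%:M : op R n)); apply: AZ.
have [Q [AQ HQ]] := @proj_exists R (hdim n) A A0 AD AZ Aadj O.
have QC : forall P, A P -> supported_on (nbhd d l S) P -> Q *m P = P *m Q.
  move=> P AP SP; apply: (@proj_comm R (hdim n) A AD AZ Aadj AM O Q P AQ HQ AP).
  by have := Hc P AP SP; rewrite /commutator => /eqP; rewrite subr_eq0 => /eqP.
have nsupp : forall x, x \in S -> exists T, supp' T Q /\ x \notin T.
  move=> x xS; apply: NNPP => H.
  have inS : @in_support R V n Q x.
    move=> T ST; apply: NNPP => nx; apply: H; exists T; split.
      by apply/supportedE.
    by apply/negP.
  have [P [AP SP nc]] := vis Q AQ x inS.
  have SP' : supported_on (nbhd d l S) P.
    apply/supportedE; apply: (supp_mono (nbhd d l [set x])); last exact/supportedE.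
    apply/subsetP => y; rewrite !inE => /existsP [z /andP [zx dz]].
    apply/existsP; exists z; rewrite dz andbT.
    by move: zx; rewrite inE => /eqP ->.
  by move: nc; rewrite /commutator (QC P AP SP') subrr eqxx.
have SQ := supp_avoid S Q nsupp.
have SX := proj1 (supportedE S X) suppX.
have F := tr_factor S X Q SX SQ.
move/negP: Htr; apply; apply/eqP.
have e1 : \tr (X *m O) = \tr (X *m Q) by rewrite HQ.
have e2 : \tr O = \tr Q.
  by rewrite -[O]mul1mx -[Q]mul1mx HQ.
by rewrite e1 e2 F.
Qed.
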